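(* Let $\gamma_1,\dots,\gamma_T$ be real numbers with $0<\gamma_k<1$ for all $1\le k\le T$, and let $\gamma_{max}^k=\max\{\gamma_1,\dots,\gamma_k\}$. Let $\alpha>0$, $0<\beta<1/\gamma_{max}^T$ and $i\in\{1,2,\dots\}$. Define $$\Psi(k)=\left[(1-\gamma_{max}^k\beta)^{k-1}+\dots+(1-\gamma_{max}^k\beta)+1\right](\gamma_{max}^k)^i\alpha.$$ Then for every $k$ with $1\le k\le T-1$, $$(1-\gamma_{k+1}\beta)\Psi(k)+(\gamma_{k+1})^i\alpha\le\Psi(k+1).$$ *)

(* Defs.v *)
From mathcomp Require Import all_boot all_order all_algebra.
Set Implicit Arguments. Unset Strict Implicit. Unset Printing Implicit Defensive.
Import Order.TTheory GRing.Theory Num.Theory.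
Local Open Scope ring_scope.

Definition gmax (R : realFieldType) (gamma : nat -> R) (k : nat) : R :=
  \big[Num.max/gamma 1%N]_(1 <= j < k.+1) gamma j.

Definition Psi (R : realFieldType) (gamma : nat -> R) (alpha beta : R) (i k : nat) : R :=
  (\sum_(j < k) (1 - gmax gamma k * beta) ^+ j) * (gmax gamma k) ^+ i * alpha.

(* Main.v *)
Require Import Defs.
From mathcomp Require Import all_boot all_order all_algebra.
From mathcomp Require Import zify ring lra.
Import Order.TTheory GRing.Theory Num.Theory.

Local Open Scope ring_scope.

Lemma bigmax_idx {R : realFieldType} (F : nat -> R) x y r :
  \big[Num.max/Num.max y x]_(j <- r) F j = Num.max (\big[Num.max/x]_(j <- r) F j) y.
Proof.
elim: r => [|a r IH]; first by rewrite !big_nil maxC.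
by rewrite !big_cons IH maxA.
Qed.

Lemma gmaxS {R : realFieldType} (gamma : nat -> R) k :
  gmax gamma k.+1 = Num.max (gmax gamma k) (gamma k.+1).
Proof.
rewrite /gmax /index_iota !subSS subn0.
have -> : iota 1 k.+1 = rcons (iota 1 k) k.+1 by rewrite -cats1; have := iotaD 1 k 1; rewrite addn1 add1n.
by rewrite big_rcons_op /= subn0 bigmax_idx.
Qed.

Lemma gmax_ge1 {R : realFieldType} (gamma : nat -> R) k : gamma 1%N <= gmax gamma k.
Proof.
elim: k => [|k IH]; first by by rewrite /gmax big_geq.
by rewrite gmaxS le_max IH.
Qed.

Lemma gmax_mono {R : realFieldType} (gamma : nat -> R) k m : (k <= m)%N -> gmax gamma k <= gmax gamma m.
Proof.
elim: m => [|m IH]; first by rewrite leqn0 => /eqP ->.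
rewrite leq_eqVlt => /orP [/eqP -> // | ]; rewrite ltnS => /IH h.
by rewrite gmaxS le_max h.
Qed.

Lemma geom {R : realFieldType} (x beta : R) k :
  (\sum_(j < k) (1 - x * beta) ^+ j) * (x * beta) = 1 - (1 - x * beta) ^+ k.
Proof.
have := subrX1 (1 - x * beta) k.
rewrite (_ : 1 - x * beta - 1 = - (x * beta)); last by rewrite addrAC subrr add0r.
move=> h; rewrite mulrC; apply: oppr_inj; by rewrite -mulNr -h opprB.
Qed.

Lemma sumS {R : realFieldType} (y : R) k :
  \sum_(j < k.+1) y ^+ j = 1 + y * \sum_(j < k) y ^+ j.
Proof.
rewrite big_ord_recl expr0 mulr_sumr; congr (_ + _).
by apply: eq_bigr => j _; rewrite lift0 exprS.
Qed.

Lemma powle {R : realFieldType} (x y : R) n : 0 <= x -> x <= y -> x ^+ n <= y ^+ n.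
Proof.
move=> x0 xy; apply: lerXn2r; rewrite ?nnegrE //; exact: le_trans xy.
Qed.

Theorem lemma13 (R : realFieldType) (T : nat) (gamma : nat -> R)
  (hgamma : forall k : nat, (1 <= k <= T)%N -> 0 < gamma k < 1)
  (alpha beta : R) (halpha : 0 < alpha)
  (hbeta0 : 0 < beta) (hbeta1 : beta < (gmax gamma T)^-1)
  (i : nat) (hi : (1 <= i)%N) :
  forall k : nat, (1 <= k <= T - 1)%N ->
    (1 - gamma k.+1 * beta) * Psi gamma alpha beta i k + (gamma k.+1) ^+ i * alpha
    <= Psi gamma alpha beta i k.+1.
Proof.
move=> k /andP [hk1 hkT].
have hk1T : (1 <= k.+1 <= T)%N by apply/andP; split; lia.
have h1T : (1 <= 1 <= T)%N by apply/andP; split; lia.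
have /andP [c0 c1] := hgamma _ hk1T.
have /andP [g10 _] := hgamma _ h1T.
case: i hi => [//|i] _.
rewrite /Psi sumS gmaxS.
set g := gmax gamma k.
set c := gamma k.+1.
set gT := gmax gamma T.
have gpos : 0 < g by exact: lt_le_trans g10 (gmax_ge1 gamma k).
have hgT : g <= gT by apply: gmax_mono; lia.
have hcT : c <= gT.
  have h : (k.+1 <= T)%N by lia.
  apply: le_trans _ (@gmax_mono _ gamma _ _ h).
  by rewrite gmaxS le_max lexx orbT.
have gTpos : 0 < gT by exact: lt_le_trans hgT.
have hbT : gT * beta < 1.
  by move: hbeta1; rewrite -div1r ltr_pdivlMr // mulrC.
have hy0 : 0 <= 1 - g * beta.
  rewrite subr_ge0; apply: ltW; apply: le_lt_trans hbT; rewrite ler_pM2r //.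
have hy'0 : 0 <= 1 - c * beta.
  rewrite subr_ge0; apply: ltW; apply: le_lt_trans hbT; rewrite ler_pM2r //.
have gb : 0 < g * beta by rewrite mulr_gt0.
have cb : 0 < c * beta by rewrite mulr_gt0.
have eg := geom g beta k.
have ec := geom c beta k.
set Sg := \sum_(j < k) (1 - g * beta) ^+ j.
set Sc := \sum_(j < k) (1 - c * beta) ^+ j.
have ykle1 : (1 - g * beta) ^+ k <= 1 by apply: exprn_ile1 => //; lra.
have yk0 : 0 <= (1 - g * beta) ^+ k by apply: exprn_ge0.
have ckle1 : (1 - c * beta) ^+ k <= 1 by apply: exprn_ile1 => //; lra.
have ck0 : 0 <= (1 - c * beta) ^+ k by apply: exprn_ge0.
case: (leP c g) => hcg.
- rewrite -/Sg !exprS.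
  set P := g ^+ i; set Q := c ^+ i; set yk := (1 - g * beta) ^+ k.
  have P0 : 0 <= P by apply: exprn_ge0; exact: ltW.
  have QP : Q <= P by apply: powle => //; exact: ltW.
  rewrite -subr_ge0.
  have -> : (1 + (1 - g*beta) * Sg) * (g * P) * alpha - ((1 - c*beta) * (Sg * (g * P) * alpha) + c * Q * alpha)
     = alpha*((g-c)*yk*P + c*(P-Q)) - alpha*(g-c)*P*(Sg*(g*beta) - (1-yk)) by ring.
  rewrite eg subrr mulr0 subr0.
  apply: mulr_ge0; first exact: ltW.
  apply: addr_ge0; apply: mulr_ge0; rewrite ?subr_ge0 //; try exact: ltW.
  by apply: mulr_ge0; rewrite ?subr_ge0.
- rewrite -/Sg -/Sc !exprS.
  set P := g ^+ i; set Q := c ^+ i; set yk := (1 - g * beta) ^+ k; set ck := (1 - c * beta) ^+ k.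
  have P0 : 0 <= P by apply: exprn_ge0; exact: ltW.
  have PQ : P <= Q by apply: powle; exact: ltW.
  have gcb : g * beta <= c * beta by rewrite ler_pM2r // ltW.
  have cy : ck <= yk by apply: powle => //; lra.
  have key : Sg * (g * P) <= Sc * (c * Q).
    rewrite -(ler_pM2r hbeta0).
    have -> : Sg * (g * P) * beta = (Sg * (g * beta)) * P by ring.
    have -> : Sc * (c * Q) * beta = (Sc * (c * beta)) * Q by ring.
    rewrite eg ec; apply: ler_pM => //; rewrite ?subr_ge0 //. by rewrite lerD2l lerN2.
  rewrite -subr_ge0.
  have -> : (1 + (1 - c*beta) * Sc) * (c * Q) * alpha - ((1 - c*beta) * (Sg * (g * P) * alpha) + c * Q * alpha)
     = (1 - c*beta) * alpha * (Sc * (c * Q) - Sg * (g * P)) by ring.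
  by apply: mulr_ge0; [apply: mulr_ge0 => //; exact: ltW | rewrite subr_ge0].
Qed.
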